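(* Let $S$ be a semigroup with a subsemigroup $T$ such that $S\setminus T$ is an ideal of $S$. (1) If $S$ is right ideal Howson then so is $T$. (2) If moreover $S\setminus T$ is finite, then $S$ is right ideal Howson if and only if $T$ is right ideal Howson.
   Context: A semigroup $S$ is right ideal Howson if the intersection of any two finitely generated right ideals of $S$ is finitely generated, where a right ideal $I$ is finitely generated if $I=XS^1$ for a finite $X\subseteq I$ ($S^1$ being $S$ if $S$ is a monoid and otherwise $S$ with an identity adjoined). *)

(* Defs.v *)
(* plain Rocq.  A semigroup is a carrier type S with an
   associative binary operation mul.  A subsemigroup is a predicate A on S
   closed under mul; S itself is the subsemigroup (fun _ => True). *)
From Stdlib Require Import List.

Definition associative {S : Type} (mul : S -> S -> S) : Prop :=
  forall x y z, mul x (mul y z) = mul (mul x y) z.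

Definition subsemigroup {S : Type} (mul : S -> S -> S) (A : S -> Prop) : Prop :=
  forall x y, A x -> A y -> A (mul x y).

Definition is_ideal {S : Type} (mul : S -> S -> S) (I : S -> Prop) : Prop :=
  forall s u, I u -> I (mul s u) /\ I (mul u s).

(* I is a finitely generated right ideal of the semigroup with underlying set A:
   I = X A^1 = X ∪ X A for a finite X ⊆ I (X ⊆ A is implied). *)
Definition fg_right_ideal {S : Type} (mul : S -> S -> S) (A : S -> Prop)
    (I : S -> Prop) : Prop :=
  exists X : list S,
    (forall x, In x X -> A x) /\
    (forall y, I y <-> exists x, In x X /\ (y = x \/ exists a, A a /\ y = mul x a)).

Definition right_ideal_Howson {S : Type} (mul : S -> S -> S) (A : S -> Prop) : Prop :=
  forall I J : S -> Prop,
    fg_right_ideal mul A I -> fg_right_ideal mul A J ->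
    fg_right_ideal mul A (fun x => I x /\ J x).

Definition finite_set {S : Type} (P : S -> Prop) : Prop :=
  exists l : list S, forall x, P x -> In x l.

(* Main.v *)
Require Import Defs.
From Stdlib Require Import List Classical.

Definition gen {S : Type} (mul : S -> S -> S) (A : S -> Prop) (X : list S) (y : S) : Prop :=
  exists x, In x X /\ (y = x \/ exists a, A a /\ y = mul x a).

Lemma filt {S : Type} (P : S -> Prop) (l : list S) :
  exists l', forall x, In x l' <-> In x l /\ P x.
Proof.
  induction l as [|a l IH].
  - exists nil; simpl; tauto.
  - destruct IH as [l' H]. destruct (classic (P a)) as [Pa|nPa].
    + exists (a :: l'). intros x; simpl; rewrite H. split.
      * intros [<-|[]]; auto.
      * intros [[<-|?] ?]; auto.
    + exists l'. intros x; rewrite H; simpl. split.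
      * intros [? ?]; auto.
      * intros [[<-|?] ?]; [contradiction|auto].
Qed.

Section S.
Context {S : Type} (mul : S -> S -> S) (T : S -> Prop)
  (Has : associative mul) (Hsub : subsemigroup mul T)
  (Hid : is_ideal mul (fun x => ~ T x)).

Lemma L1 X y : (forall x, In x X -> T x) -> T y -> gen mul (fun _ => True) X y -> gen mul T X y.
Proof.
  intros HX Ty [x [Hx [E|[a [_ E]]]]].
  - exists x; auto.
  - exists x; split; auto. right; exists a; split; auto.
    apply NNPP; intro na. apply (proj1 (Hid x a na)). rewrite <- E; exact Ty.
Qed.

Lemma L2 A X y : gen mul A X y -> gen mul (fun _ => True) X y.
Proof. intros [x [Hx [E|[a [_ E]]]]]; exists x; split; auto. right; exists a; auto. Qed.

Lemma L3 X y : (forall x, In x X -> T x) -> gen mul T X y -> T y.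
Proof. intros HX [x [Hx [E|[a [Ta E]]]]]; subst; auto. Qed.



Lemma L4 Z Z' y : (forall x, In x Z' <-> In x Z /\ T x) ->
  gen mul (fun _ => True) Z y -> T y -> gen mul (fun _ => True) Z' y.
Proof.
  intros HZ [z [Hz [E|[a [_ E]]]]] Ty.
  - subst. exists z; split; auto. apply HZ; auto.
  - exists z; split; [|right; exists a; auto]. apply HZ; split; auto.
    apply NNPP; intro nz. apply (proj2 (Hid a z nz)). rewrite <- E; exact Ty.
Qed.

Lemma Lsub A X X' y : (forall x, In x X -> In x X') -> gen mul A X y -> gen mul A X' y.
Proof. intros H [x [Hx R]]; exists x; auto. Qed.

Lemma Lclos X z a : gen mul (fun _ => True) X z -> gen mul (fun _ => True) X (mul z a).
Proof.
  intros [x [Hx [E|[b [_ E]]]]]; exists x; split; auto; right; subst.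
  - exists a; auto.
  - exists (mul b a); split; [exact I|]. symmetry; apply Has.
Qed.

End S.

Theorem mainTheorem18 (S : Type) (mul : S -> S -> S) (T : S -> Prop) :
  associative mul ->
  subsemigroup mul T ->
  is_ideal mul (fun x => ~ T x) ->
  (right_ideal_Howson mul (fun _ => True) -> right_ideal_Howson mul T) /\
  (finite_set (fun x => ~ T x) ->
     (right_ideal_Howson mul (fun _ => True) <-> right_ideal_Howson mul T)).
Proof.
  intros Has Hsub Hid.
  assert (P1 : right_ideal_Howson mul (fun _ => True) -> right_ideal_Howson mul T).
  { intros HS I J [X [HX HI]] [Y [HY HJ]].
    destruct (HS (gen mul (fun _ => True) X) (gen mul (fun _ => True) Y)) as [Z [_ HZ]].
    { exists X; split; auto; intros; tauto. }
    { exists Y; split; auto; intros; tauto. }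
    destruct (filt T Z) as [Z' HZ'].
    exists Z'; split; [intros x Hx; apply HZ'; exact Hx|].
    intros y; split.
    - intros [Iy Jy]. apply HI in Iy; apply HJ in Jy.
      assert (Ty : T y) by exact (L3 mul T Hsub X y HX Iy).
      apply (L1 mul T Hid); [intros x Hx; apply HZ'; exact Hx|exact Ty|].
      apply (L4 mul T Hid Z); auto. apply HZ. split; eapply L2; eauto.
    - intros G.
      assert (Ty : T y) by (apply (L3 mul T Hsub Z' y); [intros x Hx; apply HZ'; exact Hx|exact G]).
      assert (G2 : gen mul (fun _ => True) Z y).
      { apply (Lsub mul _ Z'); [intros x Hx; apply HZ'; exact Hx|]. eapply L2; eauto. }
      apply HZ in G2. destruct G2 as [GX GY]. split.
      + apply HI. apply (L1 mul T Hid); auto.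
      + apply HJ. apply (L1 mul T Hid); auto. }
  split; [exact P1|]. intros [L HL]. split; [exact P1|].
  intros HT I J [X [_ HI]] [Y [_ HJ]].
  destruct (filt T X) as [XT HXT]. destruct (filt T Y) as [YT HYT].
  destruct (HT (gen mul T XT) (gen mul T YT)) as [W [HW HWe]].
  { exists XT; split; [intros x Hx; apply HXT; exact Hx|]; intros; tauto. }
  { exists YT; split; [intros x Hx; apply HYT; exact Hx|]; intros; tauto. }
  destruct (filt (fun y => I y /\ J y) L) as [F HF].
  assert (WI : forall w, In w W -> I w /\ J w).
  { intros w Hw. assert (G : gen mul T W w) by (exists w; auto).
    apply HWe in G. destruct G as [G1 G2]. split.
    - apply HI. apply (Lsub mul _ XT); [intros x Hx; apply HXT; exact Hx|]. eapply L2; eauto.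
    - apply HJ. apply (Lsub mul _ YT); [intros x Hx; apply HYT; exact Hx|]. eapply L2; eauto. }
  exists (W ++ F); split; [intros; trivial|].
  intros y; split.
  - intros [Iy Jy]. destruct (classic (T y)) as [Ty|nTy].
    + apply HI in Iy; apply HJ in Jy.
      assert (G : gen mul T W y).
      { apply HWe; split.
        - apply (L1 mul T Hid); [intros x Hx; apply HXT; exact Hx|exact Ty|].
          eapply (L4 mul T Hid); eauto.
        - apply (L1 mul T Hid); [intros x Hx; apply HYT; exact Hx|exact Ty|].
          eapply (L4 mul T Hid); eauto. }
      apply (Lsub mul _ W); [intros; apply in_or_app; auto|]. eapply L2; eauto.
    + exists y; split; auto. apply in_or_app; right. apply HF; auto.
  - intros [z [Hz R]].
    assert (Iz : I z /\ J z).
    { apply in_app_or in Hz; destruct Hz as [Hz|Hz]; [apply WI; auto|apply HF; auto]. }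
    destruct Iz as [Iz Jz]. destruct R as [E|[a [_ E]]]; subst; [split; auto|].
    apply HI in Iz; apply HJ in Jz. split; [apply HI|apply HJ]; apply (Lclos mul Has); auto.
Qed.
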